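(* Let $n\ge 2$. To each line of play of Planted Brussels Sprouts of order $n$ associate a sequence $(a_1,\dots,a_{n-1})$ as follows. Suppose the $k$-th move joins free arms with short labels $i$ and $j$ lying in a common region. In that region, just before the move, let $i^-$ and $j^-$ be the short labels of the free arms immediately counterclockwise from the arm $i$ and from the arm $j$, respectively. Set $a_k=\min(i^-,j^-)$. Then distinct lines of play give distinct sequences. Moreover, the set of sequences obtained is exactly the set of parking functions of length $n-1$.
   Context: Planted Brussels Sprouts of order $n$: start with a closed disk with $n$ marked points on its boundary circle, labeled $1,\dots,n$ in clockwise order. Attached to each marked point is an arm, a short segment pointing into the interior of the disk; these arms are free. A move consists of two steps. First, choose two free arms and join their free ends by a simple curve (an arc) in the disk that does not intersect any previously drawn arc or arm; the two joined arms cease to be free. Second, mark a point (a notch) on the arc, from which two new free arms emanate, one on each side of the arc. The game ends when no move is possible. A line of play is the full sequence of moves. Two lines of play are the same iff for each $k$ the arms joined at the $k$-th move coincide. Arms are identified by long labels: the original arm $i$ has long label $i$, and when arms with long labels $\alpha,\beta$ are joined, the new arms have long labels $(\alpha,\beta)$ and $(\beta,\alpha)$. Short labels: the original arm at point $i$ has short label $i$. If an arc joins arms with short labels $i$ and $j$, the two new arms receive short labels $i$ and $j$, placed so that, going clockwise around the notch, one sees the old arm $i$, the new arm $i$, the old arm $j$, and the new arm $j$. Regions and subgames: at any stage, the drawn arcs divide the disk into regions. The free arms in a region form a subgame, and any move joins two free arms of the same region. Within a region, the free arms carry distinct short labels and have a cyclic (clockwise) order around the region. ''Immediately counterclockwise''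 refers to the preceding free arm in this cyclic order. A parking function of length $n-1$ is a sequence $(a_1,\dots,a_{n-1})$ of integers in $\{1,\dots,n-1\}$ such that, if it is rearranged in weakly increasing order $a'_1\le\cdots\le a'_{n-1}$, then $a'_i\le i$ for all $i$. *)

(* Defs.v *)
From mathcomp Require Import all_boot.
Set Implicit Arguments. Unset Strict Implicit. Unset Printing Implicit Defensive.

(* Long labels: original arm i is [Leaf i]; when arms alpha, beta are joined
   the new arms have long labels (alpha,beta) = [Node 0 [:: alpha; beta]] and
   (beta,alpha) = [Node 0 [:: beta; alpha]]. *)
Definition arm := GenTree.tree nat.
Definition orig (i : nat) : arm := GenTree.Leaf i.
Definition joined (a b : arm) : arm := GenTree.Node 0 [:: a; b].

(* A free arm together with its short label. *)
Definition farm := (arm * nat)%type.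

(* A region: the list of its free arms in clockwise cyclic order
   (starting point arbitrary). A game state: the list of regions. *)
Definition region := seq farm.
Definition state := seq region.

Definition init (n : nat) : state := [:: [seq (orig i, i) | i <- iota 1 n]].

(* A move joins arms x (short label sx) and y (short label sy) of a region
   whose clockwise cyclic order is  x, A, y, B.  The arc splits the region into
   the part with clockwise order  (new arm (x,y), short label sx), A  and the
   part with clockwise order  (new arm (y,x), short label sy), B  (the new arm
   of short label sx lies at the former place of x, cf. the short-label rule).
   The free arm immediately counterclockwise from x is the last element of
   y :: B, the one immediately counterclockwise from y is the last element of
   x :: A; the recorded value is the minimum of their short labels. *)
Inductive play : state -> seq (arm * arm) -> seq nat -> Prop :=
| play_end (s : state) :
    all (fun R : region => size R <= 1) s -> play s [::] [::]
| play_step (s1 s2 : state) (k : nat) (x y : arm) (sx sy : nat)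
    (A B : region) (l : seq (arm * arm)) (a : seq nat) :
    play (s1 ++ ((joined x y, sx) :: A) :: ((joined y x, sy) :: B) :: s2) l a ->
    play (s1 ++ rot k ((x, sx) :: A ++ (y, sy) :: B) :: s2)
         ((x, y) :: l)
         (minn (last (y, sy) B).2 (last (x, sx) A).2 :: a).

(* Moves are unordered pairs of arms: two lines of play are the same iff at
   each step the same two arms are joined. *)
Definition same_move (p q : arm * arm) : bool :=
  (p == q) || (p == (q.2, q.1)).

Definition same_line (l1 l2 : seq (arm * arm)) : bool := all2 same_move l1 l2.

Definition parking_function (m : nat) (a : seq nat) : Prop :=
  [/\ size a = m,
      all (fun x => 1 <= x <= m) a &
      forall i : 'I_m, nth 0 (sort leq a) i <= i.+1].

(* Main.v *)
Require Import Defs.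
From mathcomp Require Import all_boot.
From mathcomp Require Import zify.
Set Implicit Arguments. Unset Strict Implicit. Unset Printing Implicit Defensive.


Section L.
Variable T : eqType.

Lemma cat_split (P Q M1 M2 : seq T) : P ++ Q = M1 ++ M2 ->
  (exists W, M1 = P ++ W /\ Q = W ++ M2) \/ (exists W, P = M1 ++ W /\ M2 = W ++ Q).
Proof.
elim: P M1 => [|p P IH] [|m M1] /=.
- by move=> ->; left; exists [::].
- by move=> ->; left; exists (m :: M1).
- by move=> <-; right; exists (p :: P).
- case=> -> /IH [[W [-> ->]]|[W [-> ->]]]; [left|right]; by exists W.
Qed.

Definition cyc (M N : seq T) := exists M1 M2, M = M1 ++ M2 /\ N = M2 ++ M1.

Lemma cyc_refl M : cyc M M. Proof. by exists [::], M; rewrite cats0. Qed.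
Lemma cyc_sym M N : cyc M N -> cyc N M.
Proof. by case=> [M1 [M2 [-> ->]]]; exists M2, M1. Qed.
Lemma cyc_trans M N O : cyc M N -> cyc N O -> cyc M O.
Proof.
case=> [M1 [M2 [-> ->]]] [N1 [N2 [E ->]]].
case: (cat_split E) => [[W [-> ->]]|[W [-> ->]]].
- by exists W, (N2 ++ M2); rewrite -!catA.
- by exists (M1 ++ N1), W; rewrite -!catA.
Qed.
Lemma cyc_rot k M : cyc M (rot k M).
Proof. by exists (take k M), (drop k M); rewrite cat_take_drop. Qed.
Lemma cyc_catC P Q : cyc (P ++ Q) (Q ++ P).
Proof. by exists P, Q. Qed.
Lemma cyc_rotE M N : cyc M N -> exists k, N = rot k M.
Proof. by case=> [M1 [M2 [-> ->]]]; exists (size M1); rewrite rot_size_cat. Qed.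
Lemma cyc_perm M N : cyc M N -> perm_eq M N.
Proof. by case=> [M1 [M2 [-> ->]]]; rewrite perm_catC. Qed.
Lemma cyc_mem M N : cyc M N -> M =i N.
Proof. by move/cyc_perm/perm_mem. Qed.
Lemma cyc_uniq M N : cyc M N -> uniq M = uniq N.
Proof. by move/cyc_perm/perm_uniq. Qed.

Lemma cyc_split_eq (P Q P' Q' : seq T) :
  P != [::] -> Q != [::] -> uniq (P ++ Q) -> cyc (P ++ Q) (P' ++ Q') -> P =i P' ->
  P = P' /\ Q = Q'.
Proof.
move=> nP nQ U C E.
have U' : uniq (P' ++ Q') by rewrite -(cyc_uniq C).
have sz : size P = size P'.
  apply: perm_size; apply: uniq_perm => //.
  - by move: U; rewrite cat_uniq => /and3P[].
  - by move: U'; rewrite cat_uniq => /and3P[].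
have fin : P ++ Q = P' ++ Q' -> P = P' /\ Q = Q'.
  move=> H; have := H; move/eqP; rewrite eqseq_cat // => /andP[/eqP -> /eqP ->].
  by [].
have disj : forall z, z \in Q -> z \in P -> False.
  move=> z zQ zP; move: U; rewrite cat_uniq => /and3P[_ /hasP H _].
  by apply: H; exists z.
case: C => [M1 [M2 [E1 E2]]].
case: (cat_split E1) => [[W [HM1 HQ]]|[W [HP HM2]]].
- case: M2 E1 E2 HQ => [|m M2] E1 E2 HQ.
  + by apply: fin; rewrite E1 E2 cats0.
  + case: P' U' fin E2 E sz => [|p' P'] U' fin E2 E sz.
      by move: nP; rewrite -size_eq0 sz.
    case: E2 => Em _.
    have : m \in P by rewrite E Em mem_head.
    by move=> mP; exfalso; apply: (disj m) => //; rewrite HQ mem_cat mem_head orbT.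
- case: M1 E1 E2 HP => [|m M1] E1 E2 HP.
  + by apply: fin; rewrite E1 E2 cats0.
  + rewrite HM2 -catA in E2.
    case: (cat_split (esym E2)) => [[Z [HP' HQ']]|[Z [HW HQ']]]; last first.
    * by move: sz; rewrite HP HW !size_cat /=; lia.
    * case: Z HP' HQ' => [|z Z] HP' HQ'.
        by move: sz; rewrite HP HP' cats0 size_cat /=; lia.
      have [q [Q1 EQ]] : exists q Q1, Q = q :: Q1 by case: (Q) nQ => // q Q1 _; exists q, Q1.
      move: HQ'; rewrite EQ => -[Eq _]; subst z.
      exfalso; apply: (disj q); first by rewrite EQ mem_head.
      by rewrite E HP' mem_cat mem_head orbT.
Qed.
End L.

Definition csorted (M : seq nat) := exists N, cyc M N /\ pairwise ltn N.

Lemma csorted_cyc M N : cyc M N -> csorted M -> csorted N.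
Proof. move=> C [O [C' H]]; exists O; split=> //; exact: cyc_trans (cyc_sym C) C'. Qed.

Lemma csorted_catl P Q : csorted (P ++ Q) -> csorted P.
Proof.
case=> [N [[M1 [M2 [E EN]]] H]]; subst N.
case: (cat_split E) => [[W [E1 E2]]|[W [E1 E2]]]; subst.
- exists P; split; first exact: cyc_refl.
  by move: H; rewrite !pairwise_cat => /and3P[_ _ /and3P[]].
- exists (W ++ M1); split; first exact: cyc_catC.
  move: H; rewrite -catA !pairwise_cat allrel_catr => /and3P[/andP[_ ->] -> /and3P[_ _ ->]].
  by [].
Qed.

Lemma csorted_catr P Q : csorted (P ++ Q) -> csorted Q.
Proof. by move=> H; apply: (@csorted_catl Q P); apply: csorted_cyc H; apply: cyc_catC. Qed.


Lemma pw_lt (s1 s2 : seq nat) y z : pairwise ltn (s1 ++ s2) -> y \in s1 -> z \in s2 -> y < z.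
Proof. rewrite pairwise_cat => /and3P[/allrelP H _ _]; exact: H. Qed.

Lemma pw_catl (s1 s2 : seq nat) : pairwise ltn (s1 ++ s2) -> pairwise ltn s1.
Proof. by rewrite pairwise_cat => /and3P[]. Qed.
Lemma pw_catr (s1 s2 : seq nat) : pairwise ltn (s1 ++ s2) -> pairwise ltn s2.
Proof. by rewrite pairwise_cat => /and3P[]. Qed.

Lemma pw_le_last (s : seq nat) d y : pairwise ltn s -> y \in s -> y <= last d s.
Proof.
elim: s d => [//|x s IH] d /= /andP[/allP A P]; rewrite inE => /orP[/eqP->|ys].
- case: s IH A P => [//|z s] IH A P /=.
  have : x < last z s by apply: A; exact: mem_last.
  lia.
- exact: IH.
Qed.

Lemma last_catne (T : eqType) (s W : seq T) x y : W != [::] -> last x (s ++ W) = last y W.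
Proof. by case: W => // w W _; rewrite last_cat. Qed.

Lemma mem_last0 (s : seq nat) : s != [::] -> last 0 s \in s.
Proof. by case: s => // x s _; rewrite /= mem_last. Qed.

Lemma arc_shape (P Q : seq nat) : P != [::] -> Q != [::] -> csorted (P ++ Q) ->
  last 0 P < last 0 Q ->
  exists W Z, [/\ W != [::], P = Z ++ W & pairwise ltn (W ++ Q ++ Z)].
Proof.
move=> nP nQ [N [[M1 [M2 [E EN]]] H]] lt; subst N.
case: (cat_split E) => [[W [E1 E2]]|[W [E1 E2]]]; subst.
- case: M2 H E lt nQ => [|m M2] H E lt nQ.
  + by exists P, [::]; split => //; move: H; rewrite !cats0.
  + exfalso.
    have : last 0 (W ++ m :: M2) < last 0 P.
      apply: (@pw_lt (m :: M2) (P ++ W)) => //.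
      * by rewrite (last_catne _ _ 0) // mem_last0.
      * by rewrite mem_cat mem_last0.
    lia.
- case: W H E lt nP => [|w W] H E lt nP.
  + exfalso; move: H lt; rewrite cats0 /= => H.
    have : last 0 Q < last 0 M1 by apply: (pw_lt H); apply: mem_last0 => //; rewrite cats0 in nP.
    lia.
  + by exists (w :: W), M1; split => //; rewrite -catA in H.
Qed.

Lemma arc (P Q : seq nat) : P != [::] -> Q != [::] -> csorted (P ++ Q) ->
  last 0 P < last 0 Q ->
  forall y, (y \in Q) = (y \in P ++ Q) && (last 0 P < y <= last 0 Q).
Proof.
move=> nP nQ cs lt y.
have [W [Z [nW EP H]]] := arc_shape nP nQ cs lt.
have lP : last 0 P = last 0 W by rewrite EP (last_catne _ _ 0).
rewrite lP in lt *.
have HWQ : pairwise ltn (W ++ Q) by apply: (@pw_catl _ Z); rewrite -catA.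
have HQZ : pairwise ltn (Q ++ Z) := pw_catr H.
have HQ : pairwise ltn Q := pw_catl HQZ.
have HW : pairwise ltn W := pw_catl HWQ.
case yQ: (y \in Q).
- rewrite mem_cat yQ orbT /=.
  have := pw_lt HWQ (mem_last0 nW) yQ.
  have := pw_le_last 0 HQ yQ. lia.
- rewrite EP -catA !mem_cat yQ /=.
  case yZ: (y \in Z).
  + have := pw_lt HQZ (mem_last0 nQ) yZ. rewrite /=. lia.
  + case yW: (y \in W) => //=.
    have := pw_le_last 0 HW yW. lia.
Qed.

Lemma geom (p0 q0 : nat) (P1 Q1 : seq nat) :
  let P := p0 :: P1 in let Q := q0 :: Q1 in
  uniq (P ++ Q) -> csorted (P ++ Q) ->
  let v := minn (last q0 Q1) (last p0 P1) in
  exists u, u = maxn (last q0 Q1) (last p0 P1) /\ [/\ v \in P ++ Q, u \in P ++ Q, v < u &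
    (forall y, (y \in Q) = (y \in P ++ Q) && (v < y <= u)) /\
    (forall y, (y \in P) = (y \in P ++ Q) && ~~ (v < y <= u)) \/
    (forall y, (y \in P) = (y \in P ++ Q) && (v < y <= u)) /\
    (forall y, (y \in Q) = (y \in P ++ Q) && ~~ (v < y <= u))].
Proof.
move=> P Q U cs v.
have nP : P != [::] by [].
have nQ : Q != [::] by [].
have lPm : last 0 P \in P := mem_last0 nP.
have lQm : last 0 Q \in Q := mem_last0 nQ.
have disj : forall z, z \in P -> z \in Q -> False.
  move=> z zP zQ; move: U; rewrite cat_uniq => /and3P[_ /hasP H _]; apply: H; by exists z.
have ne : last 0 P != last 0 Q by apply/eqP => E; apply: (disj (last 0 P)) => //; rewrite E.
have ev : v = minn (last 0 Q) (last 0 P) by [].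
have eP : last 0 P = last p0 P1 by [].
have eQ : last 0 Q = last q0 Q1 by [].
case: (ltngtP (last 0 P) (last 0 Q)) => [lt|lt|eq]; last by rewrite eq eqxx in ne.
- exists (last 0 Q); split; first by lia.
  split.
  + by rewrite ev mem_cat; apply/orP; left; have -> : minn (last 0 Q) (last 0 P) = last 0 P by lia.
  + by rewrite mem_cat lQm orbT.
  + lia.
  + left; have Hq := arc nP nQ cs lt.
    have -> : v = last 0 P by rewrite ev; lia.
    split=> y; first exact: Hq.
    have := Hq y.
    case yP: (y \in P); case yQ: (y \in Q); rewrite ?mem_cat ?yP ?yQ //=.
    * by exfalso; apply: (disj y).
    * by move=> <-.
    * by move=> <-.
- have cs' : csorted (Q ++ P) by apply: csorted_cyc cs; apply: cyc_catC.
  have Hp := arc nQ nP cs' lt.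
  exists (last 0 P); split; first by lia.
  split.
  + by rewrite ev mem_cat; apply/orP; right; have -> : minn (last 0 Q) (last 0 P) = last 0 Q by lia.
  + by rewrite mem_cat lPm.
  + lia.
  + right; have -> : v = last 0 Q by rewrite ev; lia.
    split=> y; first by rewrite Hp !mem_cat orbC.
    have := Hp y.
    case yP: (y \in P); case yQ: (y \in Q); rewrite ?mem_cat ?yP ?yQ //=.
    * by exfalso; apply: (disj y).
    * by move=> <-.
    * by move=> <-.
Qed.


Definition Vreg (T a : seq nat) :=
  count (fun x : nat => x \in T) a = (size T).-1 /\
  forall t, count (fun x : nat => (x \in T) && (t <= x)) a <= count (fun y : nat => t < y) T.

Lemma count_split (p q : pred nat) (s : seq nat) :
  count p s = count (fun x : nat => p x && q x) s + count (fun x : nat => p x && ~~ q x) s.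
Proof. elim: s => //= x s ->; case: (p x); case: (q x) => /=; lia. Qed.

Lemma count_sub (X C : seq nat) (q : pred nat) :
  uniq X -> uniq C -> (forall y : nat, (y \in X) = (y \in C) && q y) ->
  forall p : pred nat, count p X = count (fun y : nat => p y && q y) C.
Proof.
move=> uX uC HX p.
have pe : perm_eq X (filter q C).
  apply: uniq_perm => //; first exact: filter_uniq.
  by move=> y; rewrite mem_filter HX andbC.
by rewrite (permP pe) count_filter.
Qed.

Lemma size_sub (X C : seq nat) (q : pred nat) :
  uniq X -> uniq C -> (forall y : nat, (y \in X) = (y \in C) && q y) -> size X = count q C.
Proof. by move=> uX uC HX; rewrite -count_predT (count_sub uX uC HX). Qed.

Lemma count_pred1_le (C : seq nat) t : uniq C -> count (fun y : nat => y == t) C <= 1.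
Proof. by move=> uC; have := count_uniq_mem t uC; rewrite /= => ->; case: (t \in C). Qed.

Lemma pos_size (X : seq nat) u : u \in X -> 0 < size X.
Proof. by case: X. Qed.

Ltac nnorm := try change (Equality.sort Datatypes_nat__canonical__eqtype_Equality) with nat in *.
Ltac lia' := nnorm; lia.
Ltac ptw := let x := fresh "x" in move=> x /=; try case: (x \in _) => //=; lia.

Section Counting.
Variables (C X Y a : seq nat) (v u : nat).
Hypotheses (uC : uniq C) (uX : uniq X) (uY : uniq Y).
Hypothesis HX : forall y : nat, (y \in X) = (y \in C) && (v < y <= u).
Hypothesis HY : forall y : nat, (y \in Y) = (y \in C) && ~~ (v < y <= u).
Hypotheses (vC : v \in C) (vu : v < u).

Let cX := count_sub uX uC HX.
Let cY := count_sub uY uC HY.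
Let sX := size_sub uX uC HX.
Let sY := size_sub uY uC HY.

Lemma sizeC : size C = size X + size Y.
Proof. by rewrite sX sY -count_predT (count_split _ (fun y : nat => v < y <= u)). Qed.

Lemma vY : v \in Y. Proof. by rewrite HY vC /=; lia'. Qed.

Lemma eXa (p : pred nat) : count (fun x : nat => (x \in X) && p x) a =
  count (fun x : nat => ((x \in C) && (v < x <= u)) && p x) a.
Proof. by apply: eq_count => x; rewrite /= HX. Qed.
Lemma eYa (p : pred nat) : count (fun x : nat => (x \in Y) && p x) a =
  count (fun x : nat => ((x \in C) && ~~ (v < x <= u)) && p x) a.
Proof. by apply: eq_count => x; rewrite /= HY. Qed.

Lemma memXa : count (fun x : nat => x \in X) a = count (fun x : nat => (x \in C) && (v < x <= u)) a.
Proof. by apply: eq_count => x; rewrite /= HX. Qed.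
Lemma memYa : count (fun x : nat => x \in Y) a = count (fun x : nat => (x \in C) && ~~ (v < x <= u)) a.
Proof. by apply: eq_count => x; rewrite /= HY. Qed.

Lemma count_N : u \in C -> Vreg X a -> Vreg Y a -> Vreg C (v :: a).
Proof.
move=> uC' [X1 X2] [Y1 Y2].
have pX : 0 < size X by apply: (@pos_size _ u); rewrite HX uC' /=; lia'.
have pY : 0 < size Y by apply: (@pos_size _ v); exact: vY.
have sC := sizeC.
have cCa : count (fun x : nat => x \in C) a = count (fun x : nat => x \in X) a + count (fun x : nat => x \in Y) a.
  by rewrite memXa memYa (count_split _ (fun y : nat => v < y <= u)).
split.
  by rewrite /= vC cCa X1 Y1 sC; lia'.
move=> t /=; rewrite vC /=.
have cCt : count (fun x : nat => (x \in C) && (t <= x)) a =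
   count (fun x : nat => (x \in X) && (t <= x)) a + count (fun x : nat => (x \in Y) && (t <= x)) a.
  rewrite eXa eYa (count_split _ (fun y : nat => v < y <= u)).
  congr (_ + _); apply: eq_count; ptw.
have rC : count (fun y : nat => t < y) C = count (fun y : nat => t < y) X + count (fun y : nat => t < y) Y.
  by rewrite cX cY (count_split _ (fun y : nat => v < y <= u)).
rewrite cCt rC.
have Xt := X2 t. have Yt := Y2 t.
case: (leqP t v) => tv.
- have : count (fun x : nat => (x \in X) && (t <= x)) a <= count (fun x : nat => x \in X) a by apply: sub_count; ptw.
  have : count (fun y : nat => t < y) X = size X by rewrite cX sX; apply: eq_count; ptw.
  lia'.
- case: (leqP t u) => tu; last first.
    have : count (fun x : nat => (x \in X) && (t <= x)) a <= count (fun y : nat => t < y) X := Xt.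
    lia'.
  have : count (fun x : nat => (x \in Y) && (t <= x)) a <= count (fun x : nat => (x \in Y) && (v <= x)) a.
    by apply: sub_count; ptw.
  have := Y2 v.
  have : count (fun y : nat => v < y) Y <= count (fun y : nat => t < y) Y.
    by rewrite !cY; apply: sub_count; ptw.
  lia'.
Qed.

Lemma count_S :
  Vreg C (v :: a) ->
  count (fun x : nat => (x \in C) && (v < x <= u)) a + 1 = count (fun y : nat => v < y <= u) C ->
  (forall w, v <= w < u -> count (fun y : nat => v < y <= w) C <=
                            count (fun x : nat => (x \in C) && (v < x <= w)) a) ->
  Vreg X a /\ Vreg Y a.
Proof.
move=> [C1 C2] Heq Hw.
have sC := sizeC.
have pY : 0 < size Y by apply: (@pos_size _ v); exact: vY.
move: C1; rewrite /= vC /= => C1.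
split; split.
- rewrite memXa.
  have E : count (fun y : nat => v < y <= u) C = size X := esym sX.
  lia'.
- move=> t; rewrite eXa cX.
  case: (leqP t v) => tv.
  + have : count (fun x : nat => ((x \in C) && (v < x <= u)) && (t <= x)) a <=
           count (fun x : nat => (x \in C) && (v < x <= u)) a by apply: sub_count; ptw.
    have : count (fun y : nat => (t < y) && (v < y <= u)) C = count (fun y : nat => v < y <= u) C.
      by apply: eq_count; ptw.
    lia'.
  case: (leqP t u) => tu.
  + have E1 : count (fun x : nat => ((x \in C) && (v < x <= u)) && (t <= x)) a =
              count (fun x : nat => (x \in C) && (t <= x <= u)) a by apply: eq_count; ptw.
    have E2 : count (fun x : nat => (x \in C) && (v < x <= u)) a =
              count (fun x : nat => (x \in C) && (v < x <= t.-1)) a +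
              count (fun x : nat => (x \in C) && (t <= x <= u)) a.
      rewrite (count_split _ (fun x : nat => x < t)); congr (_ + _); apply: eq_count; ptw.
    have E3 : count (fun y : nat => v < y <= u) C =
              count (fun y : nat => v < y <= t) C + count (fun y : nat => (t < y) && (v < y <= u)) C.
      rewrite (count_split _ (fun x : nat => x <= t)); congr (_ + _); apply: eq_count; ptw.
    have E4 : count (fun y : nat => v < y <= t) C <= count (fun y : nat => v < y <= t.-1) C + 1.
      rewrite (count_split _ (fun x : nat => x == t)) addnC; apply: leq_add.
        by rewrite (eq_count (a2 := fun y => v < y <= t.-1)) // => x /=; case: eqP => [->|ne]; lia'.
      apply: leq_trans (count_pred1_le t uC); apply: sub_count; ptw.
    have := Hw t.-1; lia'.
  + have : count (fun x : nat => ((x \in C) && (v < x <= u)) && (t <= x)) a = 0.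
      rewrite (eq_count (a2 := pred0)) ?count_pred0 //; ptw.
    lia'.
- rewrite memYa.
  have E : count (fun y : nat => v < y <= u) C = size X := esym sX.
  have : count (fun x : nat => x \in C) a = count (fun x : nat => (x \in C) && (v < x <= u)) a +
                           count (fun x : nat => (x \in C) && ~~ (v < x <= u)) a.
    exact: count_split.
  lia'.
- move=> t; rewrite eYa cY.
  case: (leqP t v) => tv.
  + have Ct := C2 t; move: Ct; rewrite /= vC tv /=.
    have E1 : count (fun x : nat => (x \in C) && (t <= x)) a =
       count (fun x : nat => (x \in C) && (v < x <= u)) a +
       count (fun x : nat => ((x \in C) && ~~ (v < x <= u)) && (t <= x)) a.
      rewrite (count_split _ (fun x : nat => v < x <= u)); congr (_ + _); apply: eq_count; ptw.
    have E2 : count (fun y : nat => t < y) C = count (fun y : nat => v < y <= u) C +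
              count (fun y : nat => (t < y) && ~~ (v < y <= u)) C.
      rewrite (count_split _ (fun x : nat => v < x <= u)); congr (_ + _); apply: eq_count; ptw.
    lia'.
  case: (leqP t u) => tu.
  + have Ct := C2 u.+1; move: Ct; rewrite /= vC /=.

    have : count (fun x : nat => ((x \in C) && ~~ (v < x <= u)) && (t <= x)) a <=
           count (fun x : nat => (x \in C) && (u.+1 <= x)) a by apply: sub_count; ptw.
    have : count (fun y : nat => u.+1 < y) C <= count (fun y : nat => (t < y) && ~~ (v < y <= u)) C.
      by apply: sub_count; ptw.
    lia'.
  + have Ct := C2 t; move: Ct; rewrite /= vC /=.

    have : count (fun x : nat => ((x \in C) && ~~ (v < x <= u)) && (t <= x)) a <=
           count (fun x : nat => (x \in C) && (t <= x)) a by apply: sub_count; ptw.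
    have : count (fun y : nat => t < y) C = count (fun y : nat => (t < y) && ~~ (v < y <= u)) C.
      by apply: eq_count; ptw.
    lia'.
Qed.
End Counting.

Section Uniq.
Variables (C X1 X2 a : seq nat) (v u1 u2 : nat).
Hypotheses (uC : uniq C) (uX1 : uniq X1) (uX2 : uniq X2).
Hypothesis HX1 : forall y : nat, (y \in X1) = (y \in C) && (v < y <= u1).
Hypothesis HX2 : forall y : nat, (y \in X2) = (y \in C) && (v < y <= u2).

Lemma count_U_lt : u1 \in C -> u2 \in C -> v < u1 -> u1 < u2 -> Vreg X1 a -> Vreg X2 a -> False.
Proof.
move=> u1C u2C vu1 u12 [V1 _] [V2 W2].
have ex : exists t, (t \in C) && (u1 < t <= u2) by exists u2; rewrite u2C /=; lia'.
case: (ex_minnP ex) => ts /andP[tsC tsI] tsmin.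
have sX1 := size_sub uX1 uC HX1.
have sX2 := size_sub uX2 uC HX2.
have p1 : 0 < size X1 by apply: (@pos_size _ u1); rewrite HX1 u1C /=; lia'.
have F1 := count_split (fun x : nat => x \in X2) (fun x => x < ts) a.
have F2 : count (fun x : nat => (x \in X2) && (x < ts)) a = count (fun x : nat => x \in X1) a.
  apply: eq_count => x /=; rewrite HX1 HX2; case xC: (x \in C) => //=.
  have := tsmin x; rewrite xC /=; lia'.
have F3 : count (fun x : nat => (x \in X2) && ~~ (x < ts)) a =
          count (fun x : nat => (x \in X2) && (ts <= x)) a by apply: eq_count; ptw.
have W := W2 ts.
rewrite (count_sub uX2 uC HX2) in W.
have G1 := count_split (fun y : nat => v < y <= u2) (fun y => y <= ts) C.
have G2 : count (fun y : nat => (v < y <= u2) && ~~ (y <= ts)) C =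
          count (fun y : nat => (ts < y) && (v < y <= u2)) C by apply: eq_count; ptw.
have G3 := count_split (fun y : nat => (v < y <= u2) && (y <= ts)) (fun y => v < y <= u1) C.
have G4 : count (fun y : nat => ((v < y <= u2) && (y <= ts)) && (v < y <= u1)) C =
          count (fun y : nat => v < y <= u1) C by apply: eq_count; ptw.
have G5 : count (fun y : nat => ((v < y <= u2) && (y <= ts)) && ~~ (v < y <= u1)) C =
          count (fun y : nat => y == ts) C.
  apply: eq_in_count => y yC /=; have := tsmin y; rewrite yC /=.
  case: eqP => [->|ne]; lia'.
have G6 : count (fun y : nat => y == ts) C = 1.
  by have := count_uniq_mem ts uC; rewrite tsC.
lia'.
Qed.
End Uniq.

Lemma count_U (C X1 X2 a : seq nat) (v u1 u2 : nat) :
  uniq C -> uniq X1 -> uniq X2 ->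
  (forall y : nat, (y \in X1) = (y \in C) && (v < y <= u1)) ->
  (forall y : nat, (y \in X2) = (y \in C) && (v < y <= u2)) ->
  u1 \in C -> u2 \in C -> v < u1 -> v < u2 -> Vreg X1 a -> Vreg X2 a -> u1 = u2.
Proof.
move=> uC uX1 uX2 H1 H2 u1C u2C vu1 vu2 V1 V2.
case: (ltngtP u1 u2) => // lt; exfalso.
- exact: (count_U_lt uC uX1 uX2 H1 H2 u1C u2C vu1 lt V1 V2).
- exact: (count_U_lt uC uX2 uX1 H2 H1 u2C u1C vu2 lt V2 V1).
Qed.



Definition labs (R : region) : seq nat := map snd R.
Definition lbls (s : state) : seq nat := flatten (map labs s).
Definition Good (s : state) := uniq (lbls s) /\ forall R, R \in s -> csorted (labs R).
Definition V (s : state) (a : seq nat) :=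
  (forall x, x \in a -> x \in lbls s) /\ forall R, R \in s -> Vreg (labs R) a.

Lemma lbls_cat s1 s2 : lbls (s1 ++ s2) = lbls s1 ++ lbls s2.
Proof. by rewrite /lbls map_cat flatten_cat. Qed.
Lemma lbls_cons R s : lbls (R :: s) = labs R ++ lbls s.
Proof. by []. Qed.

Lemma lbls_perm s1 s2 : perm_eq s1 s2 -> perm_eq (lbls s1) (lbls s2).
Proof. by move=> H; apply: perm_flatten; apply: perm_map.
Qed.

Lemma mem_lbls s R z : R \in s -> z \in labs R -> z \in lbls s.
Proof. by move=> Rs zR; apply/flattenP; exists (labs R) => //; apply: map_f. Qed.

Lemma lbls_disj s1 s2 R R' z : uniq (lbls (s1 ++ R :: s2)) -> R' \in s1 ++ s2 ->
  z \in labs R -> z \in labs R' -> False.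
Proof.
move=> U R's zR zR'.
have : uniq (labs R ++ lbls (s1 ++ s2)).
  have Pm : perm_eq (R :: s1 ++ s2) (s1 ++ R :: s2) by rewrite -cat1s perm_catCA.
  by rewrite -lbls_cons (perm_uniq (lbls_perm Pm)).
rewrite cat_uniq => /and3P[_ /hasP H _]; apply: H; exists z => //.
exact: mem_lbls R's zR'.
Qed.

Lemma split_uniq (s1 s2 t1 t2 : state) R R' z :
  uniq (lbls (s1 ++ R :: s2)) -> s1 ++ R :: s2 = t1 ++ R' :: t2 ->
  z \in labs R -> z \in labs R' -> [/\ s1 = t1, R = R' & s2 = t2].
Proof.
elim: s1 t1 => [|R1 s1 IH] [|R2 t1] /=.
- by move=> _ [-> ->].
- move=> U [<- E] zR zR'; exfalso; apply: (lbls_disj (s1 := [::]) U _ zR zR').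
  by rewrite /= E mem_cat mem_head orbT.
- move=> U [E1 E2] zR zR'; exfalso; subst R1.
  apply: (lbls_disj (s1 := [::]) (R := R') (R' := R) U _ zR' zR).
  by rewrite /= mem_cat mem_head orbT.
- move=> U [-> E] zR zR'.
  have U' : uniq (lbls (s1 ++ R :: s2)) by move: U; rewrite lbls_cons cat_uniq => /and3P[].
  by case: (IH t1 U' E zR zR') => -> -> ->.
Qed.

Lemma perm_mid (T : eqType) (s1 s2 : seq T) x : perm_eql (s1 ++ x :: s2) (x :: (s1 ++ s2)).
Proof. exact: (perm_catCA s1 [:: x] s2). Qed.

Lemma play_perm s l a : play s l a -> forall s', perm_eq s s' -> play s' l a.
Proof.
elim => [s0 H|s1 s2 k x y sx sy A B l' a' _ IH] s' P.
- by apply: play_end; rewrite -(perm_all _ P).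
- set R := rot k _ in P *.
  have Rs : R \in s' by rewrite -(perm_mem P) mem_cat mem_head orbT.
  case/splitPr: Rs P => t1 t2 P.
  apply: play_step; apply: IH.
  have P' : perm_eq (s1 ++ s2) (t1 ++ t2).
    by move: P; rewrite perm_mid perm_sym perm_mid perm_sym perm_cons.
  rewrite perm_mid perm_sym perm_mid perm_sym perm_cons.
  by rewrite perm_mid perm_sym perm_mid perm_sym perm_cons.
Qed.

Lemma labs_rot k (R : region) : labs (rot k R) = rot k (labs R).
Proof. exact: map_rot. Qed.

Section Move.
Variables (k : nat) (x y : arm) (sx sy : nat) (A B : region).
Let L : region := (x, sx) :: A ++ (y, sy) :: B.
Let P0 : region := (joined x y, sx) :: A.
Let Q0 : region := (joined y x, sy) :: B.

Lemma labsL : labs L = labs P0 ++ labs Q0.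
Proof. by rewrite /labs /= map_cat. Qed.

Lemma lbls_step s1 s2 :
  perm_eq (lbls (s1 ++ P0 :: Q0 :: s2)) (lbls (s1 ++ rot k L :: s2)).
Proof.
rewrite !lbls_cat !lbls_cons perm_cat2l catA perm_cat2r labs_rot -labsL.
by rewrite perm_sym perm_rot.
Qed.

Lemma csorted_L : csorted (labs (rot k L)) -> csorted (labs P0 ++ labs Q0).
Proof.
rewrite labs_rot labsL => H; apply: csorted_cyc H; apply: cyc_sym; exact: cyc_rot.
Qed.

Lemma Good_step s1 s2 : Good (s1 ++ rot k L :: s2) -> Good (s1 ++ P0 :: Q0 :: s2).
Proof.
case=> U Hc; split.
- by rewrite (perm_uniq (lbls_step s1 s2)).
- have cL : csorted (labs P0 ++ labs Q0).
    by apply: csorted_L; apply: Hc; rewrite mem_cat mem_head orbT.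
  move=> R; rewrite mem_cat !inE => /orP[Rs1|/orP[/eqP->|/orP[/eqP->|Rs2]]].
  + by apply: Hc; rewrite mem_cat Rs1.
  + exact: csorted_catl cL.
  + exact: csorted_catr cL.
  + by apply: Hc; rewrite mem_cat !inE Rs2 !orbT.
Qed.

Definition mval := minn (last (y, sy) B).2 (last (x, sx) A).2.

Lemma geomR : uniq (labs (rot k L)) -> csorted (labs (rot k L)) ->
  let C := labs (rot k L) in
  exists u, u = maxn (last (y, sy) B).2 (last (x, sx) A).2 /\ [/\ mval \in C, u \in C, mval < u &
    (forall z : nat, (z \in labs Q0) = (z \in C) && (mval < z <= u)) /\
    (forall z : nat, (z \in labs P0) = (z \in C) && ~~ (mval < z <= u)) \/
    (forall z : nat, (z \in labs P0) = (z \in C) && (mval < z <= u)) /\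
    (forall z : nat, (z \in labs Q0) = (z \in C) && ~~ (mval < z <= u))].
Proof.
move=> U cs C.
have memC : forall z, (z \in C) = (z \in labs P0 ++ labs Q0) by move=> z; rewrite /C labs_rot mem_rot labsL.
have U' : uniq (labs P0 ++ labs Q0) by rewrite -labsL -(rot_uniq k) -labs_rot.
have cs' := csorted_L cs.
have ev : mval = minn (last sy (labs B)) (last sx (labs A)).
  by rewrite /mval /labs -!(last_map snd).
have [u [Hu [H1 H2 H3 H4]]] := @geom sx sy (labs A) (labs B) U' cs'.
exists u; split; first by rewrite Hu /labs -!(last_map snd).
rewrite ev; split; [by rewrite memC|by rewrite memC|by []|].
case: H4 => [[Ha Hb]|[Ha Hb]]; [left|right]; split=> z; rewrite memC; [exact: Ha|exact: Hb|exact: Ha|exact: Hb].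
Qed.
End Move.

Lemma Vreg_cons_notin T v a : v \notin T -> Vreg T a -> Vreg T (v :: a).
Proof. by move=> vT [H1 H2]; split; rewrite /= (negbTE vT). Qed.
Lemma Vreg_cons_inv T v a : v \notin T -> Vreg T (v :: a) -> Vreg T a.
Proof. by move=> vT [H1 H2]; split; move: H1 H2; rewrite /= (negbTE vT). Qed.

Lemma uniq_mid s1 s2 R : uniq (lbls (s1 ++ R :: s2)) -> uniq (labs R).
Proof. by rewrite lbls_cat lbls_cons !cat_uniq => /and3P[_ _ /and3P[]]. Qed.

Lemma mem_mid (T : eqType) (s1 s2 : seq T) R R' : R' \in s1 ++ R :: s2 -> R' != R -> R' \in s1 ++ s2.
Proof. by rewrite !mem_cat inE => /orP[->//|/orP[/eqP->|->]]; rewrite ?eqxx ?orbT. Qed.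

Lemma mem_mid2 (T : eqType) (s1 s2 : seq T) R1 R2 R' : R' \in s1 ++ s2 -> R' \in s1 ++ R1 :: R2 :: s2.
Proof. by rewrite !mem_cat !inE => /orP[->|->]; rewrite ?orbT. Qed.

Lemma nec s l a : play s l a -> Good s -> V s a.
Proof.
elim => [s0 Hall|s1 s2 k x y sx sy A B l' a' Hp IH] G.
- split => // R RinS; have := allP Hall R RinS.
  rewrite /Vreg /= /labs size_map => h; split => //; move: h; case: (size R) => [|[|]] //.
- have G' := Good_step G; have [Vm Vr] := IH G'.
  case: G => U Hc.
  set L := (x, sx) :: A ++ (y, sy) :: B in U Hc *.
  have RinS : rot k L \in s1 ++ rot k L :: s2 by rewrite mem_cat mem_head orbT.
  have UR := uniq_mid U.
  have U2 : uniq (labs ((joined x y, sx) :: A) ++ labs ((joined y x, sy) :: B)).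
    by rewrite -labsL -(rot_uniq k) -labs_rot.
  have uP : uniq (labs ((joined x y, sx) :: A)) by move: U2; rewrite cat_uniq => /and3P[].
  have uQ : uniq (labs ((joined y x, sy) :: B)) by move: U2; rewrite cat_uniq => /and3P[].
  have [u [_ [vC uC vu H]]] := geomR UR (Hc _ RinS).
  split.
  + move=> z; rewrite inE => /orP[/eqP->|za]; first exact: mem_lbls RinS vC.
    by rewrite -(perm_mem (lbls_step k x y sx sy A B s1 s2)); apply: Vm.
  + move=> R RS; case RR: (R == rot k L).
    * move/eqP: RR => ->.
      case: H => [[HQ HP]|[HP HQ]].
      - apply: (count_N UR uQ uP HQ HP vC vu uC); apply: Vr;
        by rewrite !mem_cat !inE eqxx ?orbT.
      - apply: (count_N UR uP uQ HP HQ vC vu uC); apply: Vr;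
        by rewrite !mem_cat !inE eqxx ?orbT.
    * have R12 : R \in s1 ++ s2 by apply: mem_mid RS _; rewrite RR.
      apply: Vreg_cons_notin; last by apply: Vr; exact: mem_mid2.
      by apply/negP => vR; apply: (lbls_disj U R12 vC vR).
Qed.

Lemma play_nil s l : play s l [::] -> l = [::].
Proof. by inversion 1. Qed.

Lemma play_inv s l v a' : play s l (v :: a') ->
  exists s1 s2 k x y sx sy A B l',
  [/\ s = s1 ++ rot k ((x, sx) :: A ++ (y, sy) :: B) :: s2, l = (x, y) :: l',
      v = minn (last (y, sy) B).2 (last (x, sx) A).2 &
      play (s1 ++ ((joined x y, sx) :: A) :: ((joined y x, sy) :: B) :: s2) l' a'].
Proof.
move=> H; inversion H; subst.
by exists s1, s2, k, x, y, sx, sy, A, B, l0.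
Qed.

Lemma lab_inj (R : region) e e' : uniq (labs R) -> e \in R -> e' \in R -> e.2 = e'.2 -> e = e'.
Proof.
elim: R => [//|f R IH] /= /andP[fR U]; rewrite !inE => /orP[/eqP->|eR] /orP[/eqP->|e'R] E //.
- by move: fR; rewrite E (map_f snd e'R).
- by move: fR; rewrite -E (map_f snd eR).
- exact: IH.
Qed.

Lemma farm_eq (R P P' : region) : uniq (labs R) -> {subset P <= R} -> {subset P' <= R} ->
  labs P =i labs P' -> P =i P'.
Proof.
have side : forall P P' : region, uniq (labs R) -> {subset P <= R} -> {subset P' <= R} ->
  labs P =i labs P' -> forall e, e \in P -> e \in P'.
  move=> Q Q' U sQ sQ' E e eQ.
  have : e.2 \in labs Q' by rewrite -E; apply: map_f.
  case/mapP => e' e'Q' Ee.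
  by rewrite (lab_inj U (sQ _ eQ) (sQ' _ e'Q') Ee).
move=> U sP sP' E e; apply/idP/idP; first exact: side.
by apply: side => // z; rewrite E.
Qed.

Lemma perm_swap2 (s1 s2 : state) R1 R2 : perm_eq (s1 ++ R1 :: R2 :: s2) (s1 ++ R2 :: R1 :: s2).
Proof.
rewrite perm_cat2l -[R1 :: R2 :: s2]/([:: R1; R2] ++ s2) -[R2 :: R1 :: s2]/([:: R2; R1] ++ s2).
by rewrite perm_cat2r; apply/permPl; exact: (perm_catC [:: R1] [:: R2]).
Qed.

Lemma orient (C Pl Ql Pl' Ql' a : seq nat) v u1 u2 :
  uniq C -> uniq Pl -> uniq Ql -> uniq Pl' -> uniq Ql' ->
  (forall z : nat, (z \in Ql) = (z \in C) && (v < z <= u1)) /\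
  (forall z : nat, (z \in Pl) = (z \in C) && ~~ (v < z <= u1)) \/
  (forall z : nat, (z \in Pl) = (z \in C) && (v < z <= u1)) /\
  (forall z : nat, (z \in Ql) = (z \in C) && ~~ (v < z <= u1)) ->
  (forall z : nat, (z \in Ql') = (z \in C) && (v < z <= u2)) /\
  (forall z : nat, (z \in Pl') = (z \in C) && ~~ (v < z <= u2)) \/
  (forall z : nat, (z \in Pl') = (z \in C) && (v < z <= u2)) /\
  (forall z : nat, (z \in Ql') = (z \in C) && ~~ (v < z <= u2)) ->
  u1 \in C -> u2 \in C -> v < u1 -> v < u2 ->
  Vreg Pl a -> Vreg Ql a -> Vreg Pl' a -> Vreg Ql' a ->
  (Pl =i Pl') \/ (Pl =i Ql').
Proof.
move=> uC uP uQ uP' uQ' H1 H2 u1C u2C vu1 vu2 VP VQ VP' VQ'.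
case: H1 => [[HQ HP]|[HP HQ]]; case: H2 => [[HQ' HP']|[HP' HQ']].
- have E := count_U uC uQ uQ' HQ HQ' u1C u2C vu1 vu2 VQ VQ'; subst u2.
  by left => z; rewrite HP HP'.
- have E := count_U uC uQ uP' HQ HP' u1C u2C vu1 vu2 VQ VP'; subst u2.
  by right => z; rewrite HP HQ'.
- have E := count_U uC uP uQ' HP HQ' u1C u2C vu1 vu2 VP VQ'; subst u2.
  by right => z; rewrite HP HQ'.
- have E := count_U uC uP uP' HP HP' u1C u2C vu1 vu2 VP VP'; subst u2.
  by left => z; rewrite HP HP'.
Qed.

Lemma mem_mid_here (T : eqType) (s1 s2 : seq T) R : R \in s1 ++ R :: s2.
Proof. by rewrite mem_cat mem_head orbT. Qed.

Lemma uniqL s l1 a : play s l1 a -> Good s -> forall l2, play s l2 a -> same_line l1 l2.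
Proof.
elim => [s0 _|s1 s2 k x y sx sy A B l1' a' Hp1 IH] G l2 H2.
  by rewrite (play_nil H2).
have [t1 [t2 [k' [x' [y' [sx' [sy' [A' [B' [l2' [E El Ev Hp2]]]]]]]]]]] := play_inv H2.
subst l2.
have G1' := Good_step G.
have VS1 := nec Hp1 G1'.
set L := (x, sx) :: A ++ (y, sy) :: B in G E G1' VS1.
set L' := (x', sx') :: A' ++ (y', sy') :: B' in E Hp2.
have G2 : Good (t1 ++ rot k' L' :: t2) by rewrite -E.
have G2' := Good_step G2.
have VS2 := nec Hp2 G2'.
case: G => U Hc.
have UR := uniq_mid U.
have [u1 [_ [vC u1C vu1 H1]]] := geomR UR (Hc _ (mem_mid_here _ _ _)).
case: G2 => U2 Hc2.
have UR2 := uniq_mid U2.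
have [u2 [_ [vC2 u2C vu2 H2']]] := geomR UR2 (Hc2 _ (mem_mid_here _ _ _)).
have Ev' : mval x y sx sy A B = mval x' y' sx' sy' A' B' := Ev.
rewrite -Ev' in vC2 vu2 H2'.
have [Es1 ER Es2] := split_uniq U E vC vC2.
subst t1 t2.
rewrite -ER in vC2 u2C H2'.
have [_ VS1r] := VS1; have [_ VS2r] := VS2.
have U2' : uniq (labs ((joined x y, sx) :: A) ++ labs ((joined y x, sy) :: B)).
  by rewrite -labsL -(rot_uniq k) -labs_rot.
have U2'' : uniq (labs ((joined x' y', sx') :: A') ++ labs ((joined y' x', sy') :: B')).
  by rewrite -labsL -(rot_uniq k') -labs_rot -ER.
have uP : uniq (labs ((joined x y, sx) :: A)) by move: U2'; rewrite cat_uniq => /and3P[].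
have uQ : uniq (labs ((joined y x, sy) :: B)) by move: U2'; rewrite cat_uniq => /and3P[].
have uP' : uniq (labs ((joined x' y', sx') :: A')) by move: U2''; rewrite cat_uniq => /and3P[].
have uQ' : uniq (labs ((joined y' x', sy') :: B')) by move: U2''; rewrite cat_uniq => /and3P[].
have m1 : forall (R1 R2 : region), R1 \in s1 ++ R1 :: R2 :: s2 by move=> *; rewrite mem_cat mem_head orbT.
have m2 : forall (R1 R2 : region), R2 \in s1 ++ R1 :: R2 :: s2 by move=> *; rewrite mem_cat !inE eqxx !orbT.
have Hor := orient UR uP uQ uP' uQ' H1 H2' u1C u2C vu1 vu2
   (VS1r _ (m1 _ _)) (VS1r _ (m2 _ _)) (VS2r _ (m1 _ _)) (VS2r _ (m2 _ _)).
have UL : uniq L by move: UR; rewrite labs_rot rot_uniq => /map_uniq.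
have cycL : cyc L L'.
  apply: cyc_trans (cyc_rot k L) _; rewrite ER; apply: cyc_sym; exact: cyc_rot.
have sub1 : forall e, e \in (x, sx) :: A -> e \in rot k L by move=> e; rewrite mem_rot /L -cat_cons mem_cat => ->.
have sub2 : forall e, e \in (y, sy) :: B -> e \in rot k L by move=> e; rewrite mem_rot /L -cat_cons mem_cat => ->; rewrite orbT.
have sub1' : forall e, e \in (x', sx') :: A' -> e \in rot k L by move=> e; rewrite ER mem_rot /L' -cat_cons mem_cat => ->.
have sub2' : forall e, e \in (y', sy') :: B' -> e \in rot k L by move=> e; rewrite ER mem_rot /L' -cat_cons mem_cat => ->; rewrite orbT.
case: Hor => Hl.
- have EP := farm_eq UR sub1 sub1' Hl.
  have cycL' : cyc (((x, sx) :: A) ++ (y, sy) :: B) (((x', sx') :: A') ++ (y', sy') :: B') := cycL.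
  have [EP' EQ'] := cyc_split_eq (P := (x, sx) :: A) (Q := (y, sy) :: B) isT isT UL cycL' EP.
  case: EP' => Ex Esx EA; case: EQ' => Ey Esy EB; subst x' sx' A' y' sy' B'.
  rewrite /same_line /= /same_move eqxx /=.
  apply: IH => //.
- have EP := farm_eq UR sub1 sub2' Hl.
  have cycL2 : cyc (((x, sx) :: A) ++ (y, sy) :: B) (((y', sy') :: B') ++ (x', sx') :: A').
    apply: cyc_trans cycL _; rewrite /L' -!cat_cons; exact: cyc_catC.
  have [EP' EQ'] := cyc_split_eq (P := (x, sx) :: A) (Q := (y, sy) :: B) isT isT UL cycL2 EP.
  case: EP' => Ey Esy EB; case: EQ' => Ex Esx EA; subst x' sx' A' y' sy' B'.
  rewrite /same_line /= /same_move eqxx orbT /=.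
  apply: IH => //.
  exact: (play_perm Hp2 (perm_swap2 _ _ _ _)).
Qed.



Lemma labs_filter (R : region) (q : pred nat) :
  labs (filter (fun e => q e.2) R) = filter q (labs R).
Proof. by elim: R => //= e R IH; case: (q e.2) => /=; rewrite IH. Qed.

Lemma sorted_split (R : region) c : pairwise ltn (labs R) ->
  R = filter (fun e => e.2 <= c) R ++ filter (fun e => c < e.2) R.
Proof.
elim: R => //= e R IH /andP[/allP H pw].
case: (leqP e.2 c) => ec /=; first by rewrite -IH.
have h1 : filter (fun e0 : arm * nat => e0.2 <= c) R = [::].
  rewrite (eq_in_filter (a2 := pred0)) ?filter_pred0 // => f fR /=.
  have h' : e.2 < f.2 := H f.2 (map_f snd fR).
  suff : ~~ (f.2 <= c) by move/negbTE.
  rewrite -ltnNge; lia.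
have h2 : filter (fun e0 : arm * nat => c < e0.2) R = R.
  rewrite (eq_in_filter (a2 := predT)) ?filter_predT // => f fR /=.
  have h' : e.2 < f.2 := H f.2 (map_f snd fR).
  suff : c < f.2 by move=> ->.
  lia.
by rewrite h1 h2.
Qed.

Lemma last_max (s : seq nat) m d : pairwise ltn s -> m \in s -> (forall z, z \in s -> z <= m) ->
  last d s = m.
Proof.
case: s => // z s pw ms H.
have h1 := pw_le_last d pw ms.
have h2 : last d (z :: s) <= m by apply: H; rewrite /= mem_last.
lia.
Qed.

Lemma last2 (e : farm) (A : region) : (last e A).2 = last 0 (labs (e :: A)).
Proof. by rewrite /labs /= (last_map snd). Qed.

Lemma bound (C : seq nat) : exists M, forall z, z \in C -> z <= M.
Proof.
elim: C => [|c C [M HM]]; first by exists 0.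
exists (maxn c M) => z; rewrite inE => /orP[/eqP->|/HM]; lia.
Qed.

Lemma move_exists (R : region) v u :
  uniq (labs R) -> csorted (labs R) -> v \in labs R -> u \in labs R -> v < u ->
  exists k x y sx sy A B, [/\ R = rot k ((x, sx) :: A ++ (y, sy) :: B),
     minn (last (y, sy) B).2 (last (x, sx) A).2 = v &
     maxn (last (y, sy) B).2 (last (x, sx) A).2 = u].
Proof.
move=> UR [N [[M1 [M2 [EC EN]]] pw]] vR uR vu; subst N.
set R1 := take (size M1) R; set R2 := drop (size M1) R.
have e1 : labs R1 = M1 by rewrite /R1 /labs map_take -/(labs R) EC take_size_cat.
have e2 : labs R2 = M2 by rewrite /R2 /labs map_drop -/(labs R) EC drop_size_cat.
set R' := R2 ++ R1.
have eR' : labs R' = M2 ++ M1 by rewrite /R' /labs map_cat -/(labs R1) -/(labs R2) e1 e2.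
have cRR' : cyc R R' by rewrite /R'; rewrite -{1}(cat_take_drop (size M1) R); exact: cyc_catC.
have memR' : forall z, (z \in labs R') = (z \in labs R).
  by move=> z; rewrite eR' EC !mem_cat orbC.
have pwR' : pairwise ltn (labs R') by rewrite eR'.
set F1 := filter (fun e : farm => e.2 <= v) R'.
set G := filter (fun e : farm => v < e.2) R'.
set F2 := filter (fun e : farm => e.2 <= u) G.
set F3 := filter (fun e : farm => u < e.2) G.
have ER' : R' = F1 ++ G := sorted_split v pwR'.
have lG : labs G = filter (fun z => v < z) (labs R') by rewrite /G (labs_filter _ (fun z => v < z)).
have pwG : pairwise ltn (labs G) by rewrite lG; exact: pairwise_filter.
have EG : G = F2 ++ F3 := sorted_split u pwG.
have lF1 : labs F1 = filter (fun z => z <= v) (labs R') by rewrite /F1 (labs_filter _ (fun z => z <= v)).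
have lF2 : labs F2 = filter (fun z => z <= u) (labs G) by rewrite /F2 (labs_filter _ (fun z => z <= u)).
have pwF1 : pairwise ltn (labs F1) by rewrite lF1; exact: pairwise_filter.
have pwF2 : pairwise ltn (labs F2) by rewrite lF2; exact: pairwise_filter.
have vF1 : v \in labs F1 by rewrite lF1 mem_filter memR' vR leqnn.
have uF2 : u \in labs F2 by rewrite lF2 lG !mem_filter memR' uR leqnn vu.
have lastF1 : last 0 (labs F1) = v.
  by apply: last_max => // z; rewrite lF1 mem_filter => /andP[].
have lastF2 : last 0 (labs F2) = u.
  by apply: last_max => // z; rewrite lF2 mem_filter => /andP[].
clear lF1 lF2 pwF1 pwF2 lG pwG; clearbody F1 F2 F3 G.
move: vF1 uF2 lastF1 lastF2 ER' EG.
case: F1 => [//|[x sx] A] _.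
case: F2 => [//|[y sy] B] _ lastF1 lastF2 ER' EG.
case EF3: F3 => [|f F3'].
- have cL : cyc ((x, sx) :: A ++ (y, sy) :: B) R.
    apply: cyc_sym; apply: cyc_trans cRR' _.
    rewrite ER' EG EF3 cats0 -cat_cons; exact: cyc_refl.
  have [k Ek] := cyc_rotE cL.
  exists k, x, y, sx, sy, A, B; split => //; rewrite !last2 lastF1 lastF2; lia.
- have cL : cyc ((y, sy) :: B ++ (f :: F3' ++ (x, sx) :: A)) R.
    apply: cyc_sym; apply: cyc_trans cRR' _.
    rewrite ER' EG EF3; have h := cyc_catC ((x, sx) :: A) (((y, sy) :: B) ++ f :: F3'); by rewrite -catA in h.
  have [k Ek] := cyc_rotE cL.
  exists k, y, f.1, sy, f.2, B, (F3' ++ (x, sx) :: A); split; first by rewrite -surjective_pairing.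
  + rewrite !last2 lastF2 -surjective_pairing.
    have -> : last 0 (labs (f :: F3' ++ (x, sx) :: A)) = last 0 (labs ((x, sx) :: A)).
      by rewrite -cat_cons /labs map_cat (last_catne _ _ 0).
    rewrite lastF1; lia.
  + rewrite !last2 lastF2 -surjective_pairing.
    have -> : last 0 (labs (f :: F3' ++ (x, sx) :: A)) = last 0 (labs ((x, sx) :: A)).
      by rewrite -cat_cons /labs map_cat (last_catne _ _ 0).
    rewrite lastF1; lia.
Qed.

Lemma suff a : forall s, Good s -> V s a -> exists l, play s l a.
Proof.
elim: a => [|v a' IH] s G [Vm Vr].
  exists [::]; apply: play_end; apply/allP => R RS.
  have [c _] := Vr R RS; move: c; rewrite /= /labs size_map.
  by case: (size R) => [|[|]].
have : v \in lbls s by apply: Vm; rewrite mem_head.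
case/flattenP => T /mapP[R RS ->] vC.
move: G Vm Vr; case/splitPr: RS => s1 s2 G Vm Vr.
set C := labs R in vC *.
have [U Hc] := G.
have UC : uniq C := uniq_mid U.
have csC : csorted C by apply: Hc; exact: mem_mid_here.
have VC : Vreg C (v :: a') by apply: Vr; exact: mem_mid_here.
have [M HM] := bound C.
pose P u := (v < u) && (count (fun x : nat => (x \in C) && (v < x <= u)) a' <
                       count (fun y : nat => v < y <= u) C).
have exP : exists u, P u.
  exists (M + v + 1); rewrite /P.
  have E1 : count (fun x : nat => (x \in C) && (v < x <= M + v + 1)) a' =
            count (fun x : nat => (x \in C) && (v < x)) a'.
    apply: eq_count => x /=; case xC: (x \in C) => //=; have := HM x xC; lia'.
  have E2 : count (fun y : nat => v < y <= M + v + 1) C = count (fun y : nat => v < y) C.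
    apply: eq_in_count => y yC /=; have := HM y yC; lia'.
  have E3 : count (fun x : nat => (x \in C) && (v < x)) a' <=
            count (fun x : nat => (x \in C) && (v <= x)) a' by apply: sub_count; ptw.
  have := VC.2 v; rewrite /= vC leqnn /=.
  rewrite E1 E2; lia'.
case: (ex_minnP exP) => u /andP[vu Hlt] umin.
have Hw : forall w, v <= w < u -> count (fun y : nat => v < y <= w) C <=
                            count (fun x : nat => (x \in C) && (v < x <= w)) a'.
  move=> w /andP[vw wu]; case: (ltnP v w) => vw'.
  - rewrite leqNgt; apply/negP => h; have := umin w; rewrite /P vw' h /=; lia'.
  - rewrite (eq_count (a2 := pred0)) ?count_pred0 // => y /=; lia'.
have E1 : count (fun y : nat => v < y <= u) C =
          count (fun y : nat => v < y <= u.-1) C + count (fun y : nat => y == u) C.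
  rewrite (count_split _ (fun y => y == u)) addnC; congr (_ + _);
  apply: eq_count => y /=; case: eqP => [->|ne]; lia'.
have E2 : count (fun y : nat => y == u) C = (u \in C) := count_uniq_mem u UC.
have E3 : count (fun x : nat => (x \in C) && (v < x <= u.-1)) a' <=
          count (fun x : nat => (x \in C) && (v < x <= u)) a' by apply: sub_count; ptw.
have E4 := Hw u.-1.
case uC: (u \in C); last first.
  exfalso; rewrite uC in E2; have : v <= u.-1 < u by lia'.
  move/E4; lia'.
have Heq : count (fun x : nat => (x \in C) && (v < x <= u)) a' + 1 =
           count (fun y : nat => v < y <= u) C.
  rewrite uC in E2; have : v <= u.-1 < u by lia'.
  move/E4; lia'.
have [k [x [y [sx [sy [A [B [ER Emin Emax]]]]]]]] := move_exists UC csC vC uC vu.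
subst R.
have [u' [Hu' [vC' u'C vu' H]]] := geomR UC csC.
have eu : u' = u by rewrite Hu' Emax.
have Ev : mval x y sx sy A B = v := Emin.
rewrite Ev eu in H.
have U2 : uniq (labs ((joined x y, sx) :: A) ++ labs ((joined y x, sy) :: B)).
  by rewrite -labsL -(rot_uniq k) -labs_rot.
have uP : uniq (labs ((joined x y, sx) :: A)) by move: U2; rewrite cat_uniq => /and3P[].
have uQ : uniq (labs ((joined y x, sy) :: B)) by move: U2; rewrite cat_uniq => /and3P[].
have [VP VQ] : Vreg (labs ((joined x y, sx) :: A)) a' /\ Vreg (labs ((joined y x, sy) :: B)) a'.
  case: H => [[HQ HP]|[HP HQ]].
  - by have [VX VY] := count_S UC uQ uP HQ HP vC vu VC Heq Hw.
  - exact: count_S UC uP uQ HP HQ vC vu VC Heq Hw.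
have G' := Good_step G.
have V' : V (s1 ++ ((joined x y, sx) :: A) :: ((joined y x, sy) :: B) :: s2) a'.
  split.
  - move=> z za; rewrite (perm_mem (lbls_step k x y sx sy A B s1 s2)); apply: Vm.
    by rewrite inE za orbT.
  - move=> R'; rewrite mem_cat !inE => /orP[R1|/orP[/eqP->|/orP[/eqP->|R2]]] //.
    + have R12 : R' \in s1 ++ s2 by rewrite mem_cat R1.
      apply: (Vreg_cons_inv _ (Vr R' _)); last by rewrite mem_cat R1.
      by apply/negP => vR; apply: (lbls_disj U R12 vC vR).
    + have R12 : R' \in s1 ++ s2 by rewrite mem_cat R2 orbT.
      apply: (Vreg_cons_inv _ (Vr R' _)); last by rewrite mem_cat inE R2 !orbT.
      by apply/negP => vR; apply: (lbls_disj U R12 vC vR).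
have [l' Hl'] := IH _ G' V'.
exists ((x, y) :: l'); rewrite -Ev; exact: play_step.
Qed.



Lemma labs_init n : labs [seq (orig i, i) | i <- iota 1 n] = iota 1 n.
Proof. by rewrite /labs -map_comp map_id. Qed.

Lemma Good_init n : Good (init n).
Proof.
split.
- by rewrite /lbls /init /= cats0 labs_init iota_uniq.
- move=> R; rewrite inE => /eqP->; rewrite labs_init.
  exists (iota 1 n); split; first exact: cyc_refl.
  by rewrite -(sorted_pairwise ltn_trans) iota_ltn_sorted.
Qed.

Lemma count_iota n t : count (fun y : nat => t < y) (iota 1 n) = n - t.
Proof.
elim: n => [|n IH] //; rewrite -[n.+1]addn1 iotaD count_cat IH /=; lia.
Qed.

Lemma sorted_nth_count (s : seq nat) i c : sorted leq s -> i < size s ->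
  (nth 0 s i <= c) = (i < count (fun x : nat => x <= c) s).
Proof.
elim: s i => [//|x s IH] i /= Hs.
have Hall := order_path_min leq_trans Hs.
have Hs' := path_sorted Hs.
have c0 : c < x -> count (fun x0 : nat => x0 <= c) s = 0.
  move=> cx; rewrite (eq_in_count (a2 := pred0)) ?count_pred0 // => z zs /=.
  have := allP Hall z zs; rewrite /=; lia'.
case: i => [|i] /= lt.
- case: (leqP x c) => xc; first lia'.
  by rewrite c0.
- rewrite IH //; case: (leqP x c) => xc; first lia'.
  rewrite c0 //; lia'.
Qed.

Lemma PF_iff n a : V (init n) a <-> parking_function n.-1 a.
Proof.
have mI : forall x, (x \in lbls (init n)) = (x \in iota 1 n).
  by move=> x; rewrite /lbls /init /= cats0 labs_init.
have Rin : [seq (orig i, i) | i <- iota 1 n] \in init n by rewrite mem_head.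
split.
- case=> Vm Vr; have [c1 c2] := Vr _ Rin; rewrite labs_init size_iota in c1 c2.
  have inI : forall x, x \in a -> 1 <= x <= n.
    by move=> x xa; have := Vm x xa; rewrite mI mem_iota; lia'.
  have sz : size a = n.-1.
    rewrite -c1 -count_predT; apply: eq_in_count => x xa /=.
    by rewrite mem_iota; have := inI x xa; lia'.
  have c2' : forall t, count (fun x : nat => t <= x) a <= n - t.
    move=> t; rewrite -count_iota; apply: leq_trans (c2 t).
    rewrite leq_eqVlt; apply/orP; left; apply/eqP; apply: eq_in_count => x xa /=.
    by rewrite mem_iota; have := inI x xa; lia'.
  split => //.
  + apply/allP => x xa; have := inI x xa.
    case: (ltnP x n) => xn; first lia'.
    have : ~~ has (fun x : nat => n <= x) a by rewrite has_count -leqNgt; have := c2' n; rewrite subnn.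
    move=> /hasPn/(_ x xa) /=; lia'.
  + move=> i.
    have ss : sorted leq (sort leq a) := sort_sorted leq_total a.
    have si : i < size (sort leq a) by rewrite size_sort sz.
    rewrite (sorted_nth_count _ ss si).
    have -> : count (fun x : nat => x <= i.+1) (sort leq a) = count (fun x : nat => x <= i.+1) a.
      by apply/permP; rewrite perm_sort.
    have := count_split predT (fun x : nat => x <= i.+1) a.
    rewrite count_predT.
    have E1 : count (fun x : nat => predT x && ~~ (x <= i.+1)) a = count (fun x : nat => i.+2 <= x) a.
      by apply: eq_count => x /=; lia'.
    have E2 : count (fun x : nat => predT x && (x <= i.+1)) a = count (fun x : nat => x <= i.+1) a.
      by apply: eq_count.
    have := c2' i.+2; have := ltn_ord i; lia'.
- case=> sz /allP Hall Hpf; split.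
  + move=> x xa; rewrite mI mem_iota; have := Hall x xa; lia'.
  + move=> R; rewrite inE => /eqP->; rewrite labs_init; split.
    * rewrite size_iota -sz -count_predT; apply: eq_in_count => x xa /=.
      by rewrite mem_iota; have := Hall x xa; lia'.
    * move=> t; rewrite count_iota.
      have le1 : count (fun x : nat => (x \in iota 1 n) && (t <= x)) a <= count (fun x : nat => t <= x) a.
        by apply: sub_count => x /= /andP[].
      apply: leq_trans le1 _.
      case: (leqP t 1) => t1.
        apply: leq_trans (count_size _ _) _; lia'.
      case: (leqP n t) => tn.
        rewrite (eq_in_count (a2 := pred0)) ?count_pred0 // => x xa /=.
        have := Hall x xa; lia'.
      have ilt : t - 2 < n.-1 by lia'.
      have := Hpf (Ordinal ilt); rewrite /=.
      have ss : sorted leq (sort leq a) := sort_sorted leq_total a.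
      have si : t - 2 < size (sort leq a) by rewrite size_sort sz.
      rewrite (sorted_nth_count _ ss si).
      have -> : count (fun x : nat => x <= (t - 2).+1) (sort leq a) =
                count (fun x : nat => x <= (t - 2).+1) a.
        by apply/permP; rewrite perm_sort.
      have := count_split predT (fun x : nat => x <= (t - 2).+1) a.
      rewrite count_predT.
      have E1 : count (fun x : nat => predT x && ~~ (x <= (t - 2).+1)) a = count (fun x : nat => t <= x) a.
        by apply: eq_count => x /=; lia'.
      have E2 : count (fun x : nat => predT x && (x <= (t - 2).+1)) a = count (fun x : nat => x <= (t - 2).+1) a.
        by apply: eq_count.
      lia'.
Qed.

Theorem theorem4 (n : nat) (hn : 2 <= n) :
  (forall (l1 l2 : seq (arm * arm)) (a : seq nat),
      play (init n) l1 a -> play (init n) l2 a -> same_line l1 l2) /\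
  (forall a : seq nat,
      (exists l : seq (arm * arm), play (init n) l a) <->
      parking_function n.-1 a).
Proof.
split.
- move=> l1 l2 a H1 H2; exact: (uniqL H1 (Good_init n) H2).
- move=> a; split.
  + by case=> l H; apply/PF_iff; exact: (nec H (Good_init n)).
  + by move=> H; apply: suff (Good_init n) _; apply/PF_iff.
Qed.
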